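(* Let $k=12a+b+\frac12$ with $a\in\mathbb Z$ and $b\in\{6,8,9,10,11,12,13,14,15,16,17,19\}$, and let $m$ be an integer such that either $m\equiv0\pmod4$, or $m\equiv1\pmod4$ and $k+\frac12$ is even, or $m\equiv3\pmod4$ and $k+\frac12$ is odd. If $m\ge4.8|a|$, then: (i) if $\theta\in(\frac\pi3,\frac{5\pi}{12}]$, then $|\mathcal C_{m,k}(\theta)|<\sqrt2$; (ii) if $\theta\in[\frac{7\pi}{12},\frac{2\pi}3)$, then $|\mathcal D_{m,k}(\theta)|<\sqrt2$.
   Context: Define $c_{m,k}=1+i$ if $m\equiv0\ (4)$ and $k+\frac12$ odd; $c_{m,k}=1-i$ if $m\equiv0\ (4)$ and $k+\frac12$ even; $c_{m,k}=0$ if $m\equiv1\ (4)$ and $k+\frac12$ even, or $m\equiv3\ (4)$ and $k+\frac12$ odd. Define $d_{m,k}=1-i$ if $m\equiv1\ (4)$ and $k+\frac12$ even; $d_{m,k}=1+i$ if $m\equiv3\ (4)$ and $k+\frac12$ odd; $d_{m,k}=0$ if $m\equiv0\ (4)$. Set $\mathcal C_{m,k}(\theta)=-c_{m,k}(2i)^{-k}(\sin\frac\theta2)^{-k}e^{-\frac{\pi im}4}e^{\frac{\pi m}2\left(\frac1{2\tan(\theta/2)}-\sin\theta\right)}$ and $\mathcal D_{m,k}(\theta)=-d_{m,k}2^{-k}(\cos\frac\theta2)^{-k}e^{\frac{\pi im}4}e^{\frac{\pi m}2\left(\frac{\tan(\theta/2)}2-\sin\theta\right)}$, with principal branches of complex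 powers. *)

(* Defs.v *)
From Stdlib Require Import Reals ZArith List.
From Coquelicot Require Import Coquelicot.
Open Scope R_scope.

Definition cexp (z : C) : C :=
  (exp (Re z) * cos (Im z), exp (Re z) * sin (Im z)).

Definition Carg (z : C) : R :=
  if Rle_dec 0 (Im z) then acos (Re z / Cmod z) else - acos (Re z / Cmod z).

Definition Clog (z : C) : C := (ln (Cmod z), Carg z).

(* principal branch of complex power z^w (0^w := 0, irrelevant here) *)
Definition Cpow (z w : C) : C :=
  if Req_EM_T (Cmod z) 0 then 0%C else cexp (w * Clog z).

(* Throughout, n : Z stands for the integer k + 1/2, i.e. k = n - 1/2. *)
Definition kval (n : Z) : R := IZR n - / 2.

(* c_{m,k}; cases not covered by the paper's definition default to 0 *)
Definition c_mk (m n : Z) : C :=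
  if Z.eqb (m mod 4) 0 then (if Z.odd n then (1, 1) else (1, -1))
  else 0%C.

(* d_{m,k}; cases not covered by the paper's definition default to 0 *)
Definition d_mk (m n : Z) : C :=
  if Z.eqb (m mod 4) 1 then (if Z.odd n then 0%C else (1, -1))
  else if Z.eqb (m mod 4) 3 then (if Z.odd n then (1, 1) else 0%C)
  else 0%C.

Definition calC (m n : Z) (theta : R) : C :=
  - c_mk m n
  * Cpow (RtoC 0 + Ci * 2)%C (RtoC (- kval n))
  * Cpow (RtoC (sin (theta / 2))) (RtoC (- kval n))
  * cexp (RtoC (- PI * IZR m / 4) * Ci)%C
  * RtoC (exp (PI * IZR m / 2 * (1 / (2 * tan (theta / 2)) - sin theta))).

Definition calD (m n : Z) (theta : R) : C :=
  - d_mk m n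
  * Cpow (RtoC 2) (RtoC (- kval n))
  * Cpow (RtoC (cos (theta / 2))) (RtoC (- kval n))
  * cexp (RtoC (PI * IZR m / 4) * Ci)%C
  * RtoC (exp (PI * IZR m / 2 * (tan (theta / 2) / 2 - sin theta))).

(* Main.v *)
Require Import Defs.
From Stdlib Require Import Reals ZArith List Lra Lia Psatz.
From Coquelicot Require Import Coquelicot.
Import ListNotations.
Open Scope R_scope.

Lemma PI_lb : 3.1415 <= PI.
Proof.
  destruct (PI_2_3_7_ineq 2) as [H _].
  unfold sum_f_R0, tg_alt, PI_2_3_7_tg, Ratan_seq in H. simpl in H.
  lra.
Qed.

Lemma exp_mul_nat (n : nat) (x : R) : exp (INR n * x) = exp x ^ n.
Proof.
  induction n as [|n IH].
  - simpl. rewrite Rmult_0_l; apply exp_0.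
  - rewrite S_INR, Rmult_plus_distr_r, Rmult_1_l, exp_plus, IH. simpl. ring.
Qed.

Lemma binom3 (n : nat) (z : R) : 0 <= z ->
  1 + INR n * z + INR n * (INR n - 1) / 2 * z^2
    + INR n * (INR n - 1) * (INR n - 2) / 6 * z^3 <= (1 + z)^n.
Proof.
  intros Hz. induction n as [|n IH].
  - simpl. lra.
  - assert (Hn : 0 <= INR n * (INR n - 1) * (INR n - 2)).
    { destruct n as [|[|n]]; [simpl; lra | simpl; lra |].
      rewrite !S_INR. pose proof (pos_INR n). assert (0 <= INR n * (INR n +1) * (INR n + 2)) by (repeat apply Rmult_le_pos; lra). nra. }
    rewrite S_INR. simpl pow in *.
    assert (H1 : 0 <= 1 + z) by lra.
    assert (H2 := Rmult_le_compat_l _ _ _ H1 IH).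
    assert (H3 : 0 <= INR n * (INR n - 1) * (INR n - 2) / 6 * (z*z*z*z)).
    { apply Rmult_le_pos. lra. repeat apply Rmult_le_pos; lra. }
    nra.
Qed.

Lemma exp_taylor3 (y : R) : 0 <= y -> 1 + y + 0.4995 * y^2 + 0.166 * y^3 <= exp y.
Proof.
  intros Hy.
  assert (E : exp y = exp (y/1000) ^ 1000).
  { rewrite <- exp_mul_nat. f_equal. rewrite INR_IZR_INZ. simpl. field. }
  rewrite E.
  eapply Rle_trans; [| apply pow_incr; split; [| apply (exp_ineq1_le (y/1000))]].
  2:{ lra. }
  eapply Rle_trans; [| apply binom3; lra].
  rewrite INR_IZR_INZ. simpl. nra.
Qed.
Lemma polyW (u : R) : 0 <= u <= 0.2176 ->
  let W := 3.1415 * (0.866 - 0.335*u) * (u+2) in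
  let D := 5*(1+u) in
  D^3 <= W * D^2 + 0.4995 * u * W^2 * D + 0.166 * u^2 * W^3.
Proof. intros H W D. unfold W, D.
  set (w := 0.2176 - u).
  assert (Hw : 0 <= w) by (unfold w; lra).
  assert (0 <= w^8) by (apply pow_le; lra).
  assert (0 <= u*w^7) by (apply Rmult_le_pos; [lra|apply pow_le; lra]).
  assert (0 <= u^2*w^6) by (apply Rmult_le_pos; apply pow_le; lra).
  assert (0 <= u^3*w^5) by (apply Rmult_le_pos; apply pow_le; lra).
  assert (0 <= u^4*w^4) by (apply Rmult_le_pos; apply pow_le; lra).
  assert (0 <= u^5*w^3) by (apply Rmult_le_pos; apply pow_le; lra).
  assert (0 <= u^6*w^2) by (apply Rmult_le_pos; apply pow_le; lra).
  assert (0 <= u^7*w) by (apply Rmult_le_pos; [apply pow_le|]; lra).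
  assert (0 <= u^8) by (apply pow_le; lra).
  assert (Hu : u = 0.2176 - w) by (unfold w; lra).
  clearbody w. subst u. lra.
Qed.

Lemma core (s c : R) : 1/2 < s -> 0 < c -> s*s + c*c = 1 -> s*s <= 0.3706 ->
  2*s <= exp (PI * c * (4*s*s-1) / (10*s)).
Proof.
  intros Hs Hc Hsc Hs2.
  set (u := 2*s-1).
  assert (Hu0 : 0 < u) by (unfold u; lra).
  assert (Hs6 : s <= 0.6088) by nra.
  assert (Hu1 : u <= 0.2176) by (unfold u; lra).
  set (l := 0.866 - 0.335*u).
  assert (Hl : 0 < l) by (unfold l; lra).
  assert (Hcl2 : l*l <= c*c).
  { assert (s = (1+u)/2) by (unfold u; lra).
    assert (0 <= u*(0.2176-u)) by nra. unfold l. nra. }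
  assert (Hcl : l <= c) by nra.
  pose proof PI_lb as Hpi.
  set (W := 3.1415 * l * (u+2)). set (D := 5*(1+u)).
  assert (HD : 0 < D) by (unfold D; lra).
  assert (HW : 0 < W) by (unfold W; nra).
  set (y := PI * c * (4*s*s-1) / (10*s)).
  assert (Hy : y = PI * c * (u*(u+2)) / D).
  { unfold y, D, u. field. lra. }
  assert (HY0 : u * (W / D) <= y).
  { rewrite Hy. unfold W. apply Rmult_le_reg_r with D; [lra|].
    field_simplify; [|lra|lra].
    assert (0 <= u*(u+2)) by nra.
    assert (3.1415 * l <= PI * c) by nra. nra. }
  assert (HP := polyW u ltac:(lra)). simpl in HP. fold l W D in HP.
  set (X := W / D).
  assert (HX : 1 <= X + 0.4995 * u * X^2 + 0.166 * u^2 * X^3).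
  { unfold X. apply Rmult_le_reg_r with (D^3). apply pow_lt; lra.
    field_simplify; [|lra]. lra. }
  assert (HX0 : 0 < X) by (unfold X; apply Rdiv_lt_0_compat; lra).
  assert (0 <= u*X) by (apply Rmult_le_pos; lra).
  fold X in HY0. assert (Hy0 : 0 <= y) by lra.
  pose proof (exp_taylor3 y Hy0) as He.
  assert (Hm : 1 + u*X + 0.4995*(u*X)^2 + 0.166*(u*X)^3 <= 1 + y + 0.4995*y^2 + 0.166*y^3).
  { assert ((u*X)^2 <= y^2) by (apply pow_incr; lra).
    assert ((u*X)^3 <= y^3) by (apply pow_incr; lra). lra. }
  assert (2*s = 1 + u) by (unfold u; lra).
  assert (u <= u*X + 0.4995*(u*X)^2 + 0.166*(u*X)^3).
  { replace (u*X + 0.4995*(u*X)^2 + 0.166*(u*X)^3) with (u * (X + 0.4995 * u * X^2 + 0.166 * u^2 * X^3)) by ring.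
    nra. }
  lra.
Qed.

Lemma Cmod_cexp z : Cmod (cexp z) = exp (fst z).
Proof.
  unfold Cmod, Defs.cexp, Re, Im. cbn [fst snd].
  pose proof (sin2_cos2 (snd z)) as H. unfold Rsqr in H.
  replace ((exp (fst z) * cos (snd z)) ^ 2 + (exp (fst z) * sin (snd z)) ^ 2)
    with (exp (fst z) ^ 2).
  - apply sqrt_pow2. left; apply exp_pos.
  - rewrite <- (Rmult_1_r (exp (fst z) ^ 2)), <- H. ring.
Qed.

Lemma Cmod_Cpow z r : Cmod z <> 0 -> Cmod (Defs.Cpow z (RtoC r)) = exp (r * ln (Cmod z)).
Proof.
  intros Hz. unfold Defs.Cpow. destruct (Req_EM_T (Cmod z) 0) as [e|_]; [contradiction|].
  rewrite Cmod_cexp. unfold Defs.Clog. simpl. f_equal. ring.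
Qed.

Lemma Cmod_c_mk m n : Cmod (c_mk m n) = sqrt 2 \/ Cmod (c_mk m n) = 0.
Proof.
  unfold c_mk. destruct (Z.eqb (m mod 4) 0); [destruct (Z.odd n)|].
  - left. unfold Cmod; simpl. f_equal. ring.
  - left. unfold Cmod; simpl. f_equal. ring.
  - right. apply Cmod_0.
Qed.

Lemma Cmod_d_mk m n : Cmod (d_mk m n) = sqrt 2 \/ Cmod (d_mk m n) = 0.
Proof.
  unfold d_mk. destruct (Z.eqb (m mod 4) 1); [destruct (Z.odd n)|destruct (Z.eqb (m mod 4) 3); [destruct (Z.odd n)|]].
  - right. apply Cmod_0.
  - left. unfold Cmod; simpl. f_equal. ring.
  - left. unfold Cmod; simpl. f_equal. ring.
  - right. apply Cmod_0.
  - right. apply Cmod_0.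
Qed.

Lemma Cmod_2i : Cmod (RtoC 0 + Ci * 2)%C = 2.
Proof.
  unfold Cmod. simpl. match goal with |- sqrt ?x = _ => replace x with (2^2) by ring end.
  apply sqrt_pow2; lra.
Qed.

Lemma Cmod_rot r : Cmod (Defs.cexp (RtoC r * Ci)%C) = 1.
Proof. rewrite Cmod_cexp. simpl. replace (r * 0 - 0 * 1) with 0 by ring. apply exp_0. Qed.

Lemma cos5 : 0.2588 <= cos (5*PI/12).
Proof.
  replace (5*PI/12) with (PI/4 + PI/6) by field.
  rewrite cos_plus, cos_PI4, sin_PI4, cos_PI6, sin_PI6.
  pose proof (sqrt_sqrt 2 ltac:(lra)) as H2. pose proof (sqrt_sqrt 3 ltac:(lra)) as H3.
  pose proof (sqrt_lt_R0 2 ltac:(lra)). pose proof (sqrt_lt_R0 3 ltac:(lra)).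
  assert (1.73205 <= sqrt 3) by nra. assert (sqrt 2 <= 1.41422) by nra.
  replace (1 / sqrt 2 * (sqrt 3 / 2) - 1 / sqrt 2 * (1 / 2)) with ((sqrt 3 - 1) / (2 * sqrt 2)) by (field; lra).
  apply Rmult_le_reg_r with (2 * sqrt 2); [lra|]. field_simplify; [|lra]. nra.
Qed.

Lemma key (a b m : Z) (s c : R) : (6 <= b)%Z -> IZR m >= 48/10 * IZR (Z.abs a) ->
  1/2 < s -> 0 < c -> s*s + c*c = 1 -> s*s <= 0.3706 ->
  exp (- kval (12*a+b+1) * ln 2) * exp (- kval (12*a+b+1) * ln s)
    * exp (PI * IZR m / 2 * (c/(2*s) - 2*s*c)) < 1.
Proof.
  intros Hb Hm Hs Hc Hsc Hs2.
  assert (Hk : kval (12*a+b+1) = 12*IZR a + IZR b + 1/2).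
  { unfold kval. rewrite !plus_IZR, mult_IZR. lra. }
  rewrite Hk. rewrite abs_IZR in Hm.
  apply IZR_le in Hb.
  rewrite <- !exp_plus. apply (Rlt_le_trans _ (exp 0)); [apply exp_increasing | rewrite exp_0; lra].
  assert (HL : ln 2 + ln s = ln (2*s)) by (rewrite ln_mult; lra).
  assert (HL0 : 0 < ln (2*s)) by (rewrite <- ln_1; apply ln_increasing; lra).
  pose proof (core s c Hs Hc Hsc Hs2) as Hcore.
  set (y := PI * c * (4*s*s-1) / (10*s)) in *.
  assert (HLy : ln (2*s) <= y) by (rewrite <- (ln_exp y); apply ln_le; lra).
  assert (HE : PI * IZR m / 2 * (c/(2*s) - 2*s*c) = -(5/2) * IZR m * y).
  { unfold y. field. lra. }
  rewrite HE.
  set (L := ln (2*s)) in *.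
  set (A := IZR a) in *. set (B := IZR b) in *. set (M := IZR m) in *.
  assert (Ha1 := Rle_abs A). assert (Ha2 : - A <= Rabs A) by (rewrite <- Rabs_Ropp; apply Rle_abs).
  assert (0 <= Rabs A) by apply Rabs_pos.
  assert (0 <= (M - 4.8 * Rabs A) * y) by (apply Rmult_le_pos; lra).
  assert (0 <= Rabs A * (y - L)) by (apply Rmult_le_pos; lra).
  assert (0 <= (Rabs A + A) * L) by (apply Rmult_le_pos; lra).
  assert (0 <= (B - 6) * L) by (apply Rmult_le_pos; lra).
  replace (- (12 * A + B + 1 / 2) * ln 2 + - (12 * A + B + 1 / 2) * ln s) with (- (12 * A + B + 1 / 2) * L) by (rewrite <- HL; ring).
  lra.
Qed.

Lemma trigC th : PI/3 < th <= 5*PI/12 ->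
  1/2 < sin (th/2) /\ 0 < cos (th/2) /\ sin (th/2) * sin (th/2) + cos (th/2) * cos (th/2) = 1
  /\ sin (th/2) * sin (th/2) <= 0.3706.
Proof.
  intros [H1 H2]. pose proof PI_RGT_0.
  assert (Hs : 0 < sin (th/2)) by (apply sin_gt_0; lra).
  assert (Hc : 0 < cos (th/2)) by (apply cos_gt_0; lra).
  pose proof (sin2_cos2 (th/2)) as Hsc. unfold Rsqr in Hsc.
  assert (Hcos : cos th = 1 - 2 * sin (th/2) * sin (th/2)).
  { rewrite <- cos_2a_sin. f_equal. field. }
  assert (Hlt : cos th < 1/2).
  { rewrite <- cos_PI3. apply cos_decreasing_1; lra. }
  assert (Hge : 0.2588 <= cos th).
  { destruct (Rle_lt_or_eq_dec _ _ H2) as [Hl|He].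
    - pose proof cos5. assert (cos (5*PI/12) < cos th) by (apply cos_decreasing_1; lra). lra.
    - rewrite He. apply cos5. }
  repeat split; try lra; nra.
Qed.

Lemma trigD th : 7*PI/12 <= th < 2*PI/3 ->
  1/2 < cos (th/2) /\ 0 < sin (th/2) /\ cos (th/2) * cos (th/2) + sin (th/2) * sin (th/2) = 1
  /\ cos (th/2) * cos (th/2) <= 0.3706.
Proof.
  intros [H1 H2]. pose proof PI_RGT_0.
  assert (Hs : 0 < sin (th/2)) by (apply sin_gt_0; lra).
  assert (Hc : 0 < cos (th/2)) by (apply cos_gt_0; lra).
  pose proof (sin2_cos2 (th/2)) as Hsc. unfold Rsqr in Hsc.
  assert (Hcos : cos th = 2 * cos (th/2) * cos (th/2) - 1).
  { rewrite <- cos_2a_cos. f_equal. field. }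
  assert (E23 : cos (2*PI/3) = -(1/2)).
  { replace (2*PI/3) with (PI - PI/3) by field. rewrite Rtrigo_facts.cos_pi_minus, cos_PI3. lra. }
  assert (E712 : cos (7*PI/12) = - cos (5*PI/12)).
  { replace (7*PI/12) with (PI - 5*PI/12) by field. apply Rtrigo_facts.cos_pi_minus. }
  assert (Hgt : -(1/2) < cos th).
  { rewrite <- E23. apply cos_decreasing_1; lra. }
  assert (Hle : cos th <= -0.2588).
  { pose proof cos5. destruct (Rle_lt_or_eq_dec _ _ H1) as [Hl|He].
    - assert (cos th < cos (7*PI/12)) by (apply cos_decreasing_1; lra). lra.
    - rewrite <- He. lra. }
  repeat split; try lra; nra.
Qed.

Theorem lemma6p1 (a b m : Z) :
  In b [6; 8; 9; 10; 11; 12; 13; 14; 15; 16; 17; 19]%Z ->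
  let n := (12 * a + b + 1)%Z in   (* n = k + 1/2, where k = 12a + b + 1/2 *)
  ((m mod 4 = 0)%Z \/ ((m mod 4 = 1)%Z /\ Z.even n = true)
                   \/ ((m mod 4 = 3)%Z /\ Z.odd n = true)) ->
  IZR m >= 48 / 10 * IZR (Z.abs a) ->
  (forall theta, PI / 3 < theta <= 5 * PI / 12 -> Cmod (calC m n theta) < sqrt 2) /\
  (forall theta, 7 * PI / 12 <= theta < 2 * PI / 3 -> Cmod (calD m n theta) < sqrt 2).
Proof.
  intros Hb n _ Hm. subst n.
  assert (Hb6 : (6 <= b)%Z) by (simpl in Hb; intuition lia).
  pose proof (sqrt_lt_R0 2 ltac:(lra)) as Hs2.
  split.
  - intros th Hth. destruct (trigC th Hth) as [Hs [Hc [Hsc Hss]]].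
    unfold calC. rewrite !Cmod_mult, Cmod_opp.
    destruct (Cmod_c_mk m (12*a+b+1)) as [E|E]; rewrite E; [| rewrite !Rmult_0_l; lra].
    rewrite (Cmod_Cpow (RtoC 0 + Ci * 2)%C) by (rewrite Cmod_2i; lra).
    rewrite (Cmod_Cpow (RtoC (sin (th/2)))) by (rewrite Cmod_R, Rabs_pos_eq; lra).
    rewrite Cmod_2i, Cmod_R, Rabs_pos_eq by lra. rewrite Cmod_rot, Cmod_R, Rabs_pos_eq by (left; apply exp_pos).
    assert (HE : 1 / (2 * tan (th / 2)) - sin th = cos (th/2) / (2 * sin (th/2)) - 2 * sin (th/2) * cos (th/2)).
    { unfold tan. replace th with (2*(th/2)) at 3 by field. rewrite sin_2a. field. lra. }
    rewrite HE.
    pose proof (key a b m (sin (th/2)) (cos (th/2)) Hb6 Hm Hs Hc Hsc Hss) as K.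
    rewrite <- (Rmult_1_r (sqrt 2)) at 2.
    rewrite Rmult_1_r, !Rmult_assoc. apply Rmult_lt_compat_l; [lra|].
    rewrite <- !Rmult_assoc. exact K.
  - intros th Hth. destruct (trigD th Hth) as [Hs [Hc [Hsc Hss]]].
    unfold calD. rewrite !Cmod_mult, Cmod_opp.
    destruct (Cmod_d_mk m (12*a+b+1)) as [E|E]; rewrite E; [| rewrite !Rmult_0_l; lra].
    rewrite (Cmod_Cpow (RtoC 2)) by (rewrite Cmod_R, Rabs_pos_eq; lra).
    rewrite (Cmod_Cpow (RtoC (cos (th/2)))) by (rewrite Cmod_R, Rabs_pos_eq; lra).
    rewrite !Cmod_R, (Rabs_pos_eq 2), (Rabs_pos_eq (cos (th/2))) by lra.
    rewrite Cmod_rot, Rabs_pos_eq by (left; apply exp_pos).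
    assert (HE : tan (th / 2) / 2 - sin th = sin (th/2) / (2 * cos (th/2)) - 2 * cos (th/2) * sin (th/2)).
    { unfold tan. replace th with (2*(th/2)) at 3 by field. rewrite sin_2a. field. lra. }
    rewrite HE.
    pose proof (key a b m (cos (th/2)) (sin (th/2)) Hb6 Hm Hs Hc Hsc Hss) as K.
    rewrite <- (Rmult_1_r (sqrt 2)) at 2.
    rewrite Rmult_1_r, !Rmult_assoc. apply Rmult_lt_compat_l; [lra|].
    rewrite <- !Rmult_assoc. exact K.
Qed.
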